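(* Let $m,n\ge2$ be integers and let $g_n(z)=\frac{z^n+n-1}{n}$ and $g_{m,n}(z)=\frac{(z^m+mn-1)^n}{(mn)^n}$. Both are polynomials having $1$ as a parabolic fixed point with multiplier $1$. For every $0\le r\le1$, with $D_r:=\{z:|z-(1-r)|<r\}$, one has $g_n(\overline{D_r})\subset D_r\cup\{1\}$ and $g_{m,n}(\overline{D_r})\subset D_r\cup\{1\}$. In particular, the immediate parabolic basins of $1$ of $g_n$ and of $g_{m,n}$ both contain the unit disk $\mathbb{D}$. *)

(* Defs.v *)
From Stdlib Require Import Reals.
Open Scope R_scope.

Definition C : Type := (R * R)%type.

Definition RtoC (x : R) : C := (x, 0).
Definition Cadd (z w : C) : C := (fst z + fst w, snd z + snd w).
Definition Copp (z : C) : C := (- fst z, - snd z).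
Definition Csub (z w : C) : C := Cadd z (Copp w).
Definition Cmul (z w : C) : C :=
  (fst z * fst w - snd z * snd w, fst z * snd w + snd z * fst w).
Definition Cinv (z : C) : C :=
  (fst z / (fst z ^ 2 + snd z ^ 2), - snd z / (fst z ^ 2 + snd z ^ 2)).
Definition Cdiv (z w : C) : C := Cmul z (Cinv w).
Fixpoint Cpow (z : C) (k : nat) : C :=
  match k with O => RtoC 1 | S k' => Cmul z (Cpow z k') end.
Definition Cmod (z : C) : R := sqrt (fst z ^ 2 + snd z ^ 2).

Definition g_n (n : nat) (z : C) : C :=
  Cmul (RtoC (/ INR n)) (Cadd (Cpow z n) (RtoC (INR n - 1))).

Definition g_mn (m n : nat) (z : C) : C :=
  Cmul (RtoC (/ (INR (m * n)) ^ n))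
       (Cpow (Cadd (Cpow z m) (RtoC (INR (m * n) - 1))) n).

Definition has_cderiv (f : C -> C) (p l : C) : Prop :=
  forall eps, 0 < eps -> exists delta, 0 < delta /\
    forall h : C, 0 < Cmod h < delta ->
      Cmod (Csub (Cdiv (Csub (f (Cadd p h)) (f p)) h) l) < eps.

Definition disk_r (r : R) (z : C) : Prop := Cmod (Csub z (RtoC (1 - r))) < r.
Definition cdisk_r (r : R) (z : C) : Prop := Cmod (Csub z (RtoC (1 - r))) <= r.

Definition unit_disk (z : C) : Prop := Cmod z < 1.

Definition iter (f : C -> C) (k : nat) (z : C) : C := Nat.iter k f z.

Definition basin (f : C -> C) (p z : C) : Prop :=
  (forall k, iter f k z <> p) /\
  (forall eps, 0 < eps -> exists N, forall k, (N <= k)%nat ->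
      Cmod (Csub (iter f k z) p) < eps).

Definition Copen (U : C -> Prop) : Prop :=
  forall z, U z -> exists eps, 0 < eps /\ forall w, Cmod (Csub w z) < eps -> U w.

Definition Cconnected (S : C -> Prop) : Prop :=
  ~ exists U V : C -> Prop, Copen U /\ Copen V /\
      (forall z, S z -> U z \/ V z) /\
      (exists z, S z /\ U z) /\ (exists z, S z /\ V z) /\
      (forall z, S z -> U z -> V z -> False).

(* immediate parabolic basin of p: union of the connected components of the
   basin of p whose closure contains p; z belongs to it iff some connected
   subset of the basin contains z and accumulates at p *)
Definition immediate_basin (f : C -> C) (p z : C) : Prop :=
  exists S : C -> Prop, Cconnected S /\ S z /\ (forall w, S w -> basin f p w) /\
    (forall eps, 0 < eps -> exists w, S w /\ Cmod (Csub w p) < eps).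

(* Main.v *)
From Pilot Require Import Defs.
From Stdlib Require Import Reals Lra Lia Psatz ZArith.
From Coquelicot Require Import Coquelicot.
Open Scope R_scope.


Definition aa (z:C) := (1 - fst z)^2 + snd z ^2.
Definition bb (z:C) := 1 - (fst z ^2 + snd z^2).

Lemma Cmod_sq z : Cmod z ^ 2 = fst z^2 + snd z^2.
Proof. unfold Cmod. rewrite pow2_sqrt; nra. Qed.

Lemma aa_Cmod z : aa z = Cmod (RtoC 1 - z)%C ^ 2.
Proof. rewrite Cmod_sq. unfold aa. destruct z; simpl. ring. Qed.

Lemma bb_Cmod z : bb z = 1 - Cmod z ^ 2.
Proof. rewrite Cmod_sq. reflexivity. Qed.

Fixpoint sr (t:R) k := match k with O => 0 | S k => sr t k + t^k end.
Fixpoint Sc (z:C) k : C := match k with O => RtoC 0 | S k => (Sc z k + z^k)%C end.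

Lemma L1 z k : (RtoC 1 - z^k = (RtoC 1 - z) * Sc z k)%C.
Proof.
  induction k; simpl.
  - ring.
  - transitivity ((RtoC 1 - z ^ k) + z^k * (RtoC 1 - z))%C. ring.
    rewrite IHk. ring.
Qed.

Lemma sr_ge0 t k : 0 <= t -> 0 <= sr t k.
Proof. intros; induction k; simpl; [lra|]. pose proof (pow_le t k H). lra. Qed.

Lemma L2 z k : Cmod (Sc z k) <= sr (Cmod z) k.
Proof.
  induction k; simpl.
  - rewrite Cmod_0; lra.
  - eapply Rle_trans. apply Cmod_triangle. rewrite Cmod_pow. lra.
Qed.

Lemma L3 s k : 1 - s^k = (1 - s) * sr s k.
Proof. induction k; simpl. ring. rewrite Rmult_plus_distr_l, <- IHk. ring. Qed.

Lemma L4a t c k : 0 <= t -> 2 * c * sr t k <= sr (t^2) k + INR k * c^2.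
Proof.
  intros Ht. induction k; cbn [sr]. simpl; lra.
  rewrite S_INR. rewrite <- pow_mult. replace (2 * k)%nat with (k + k)%nat by lia.
  rewrite pow_add. pose proof (pow2_ge_0 (c - t^k)). nra.
Qed.

Lemma L4 t k : 0 <= t -> sr t k ^ 2 <= INR k * sr (t^2) k.
Proof.
  intros Ht. induction k; cbn [sr]. simpl; lra.
  rewrite S_INR. pose proof (L4a t (t^k) k Ht).
  assert (E : (t^2)^k = t^k * t^k).
  { rewrite <- pow_mult. replace (2 * k)%nat with (k + k)%nat by lia. apply pow_add. }
  rewrite E. nra.
Qed.

Lemma sr_ge1 t k : 0 <= t -> (1 <= k)%nat -> 1 <= sr t k.
Proof.
  intros Ht Hk. induction k. lia. simpl. destruct k. simpl. lra.
  pose proof (pow_le t (S k) Ht). assert (1 <= S k)%nat by lia. specialize (IHk H0). lra.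
Qed.

Lemma bb_pow z k : bb (z^k)%C = bb z * sr (Cmod z ^ 2) k.
Proof.
  rewrite !bb_Cmod, Cmod_pow, <- pow_mult, Nat.mul_comm, pow_mult. apply L3.
Qed.

Lemma power_lemma z k : 0 <= bb z -> aa (z^k)%C * bb z <= INR k * aa z * bb (z^k)%C.
Proof.
  intros Hb. rewrite bb_pow. rewrite !aa_Cmod. rewrite L1, Cmod_mult.
  pose proof (L2 z k). pose proof (Cmod_ge_0 (Sc z k)). pose proof (Cmod_ge_0 z).
  pose proof (L4 (Cmod z) k H1).
  pose proof (Cmod_ge_0 (RtoC 1 - z)%C).
  set (A := Cmod (RtoC 1 - z)%C) in *. set (s := sr (Cmod z) k) in *.
  set (S := Cmod (Sc z k)) in *.
  assert (S^2 <= INR k * sr (Cmod z ^ 2) k) by nra.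
  assert ((A*S)^2 <= A^2 * (INR k * sr (Cmod z ^ 2) k)) by nra.
  nra.
Qed.


Definition aff (N : R) (u : C) : C := (RtoC (/ N) * (u + RtoC (N - 1)))%C.

Lemma aff_aa N u : 0 < N -> N^2 * aa (aff N u) = aa u.
Proof. intros. destruct u as [x y]. unfold aa, aff; simpl. field. lra. Qed.

Lemma aff_bb N u : 0 < N -> N^2 * bb (aff N u) = N * bb u + (N - 1) * aa u.
Proof. intros. destruct u as [x y]. unfold aa, bb, aff; simpl. field. lra. Qed.

Lemma aa_ge0 z : 0 <= aa z.
Proof. unfold aa. pose proof (pow2_ge_0 (1 - fst z)). pose proof (pow2_ge_0 (snd z)). lra. Qed.

Lemma aa_0 z : aa z = 0 -> z = RtoC 1.
Proof. destruct z as [x y]. unfold aa; cbn [fst snd]. intros H. pose proof (pow2_ge_0 (1-x)). pose proof (pow2_ge_0 y). assert (E1 : (1-x)^2 = 0) by lra. assert (E2 : y^2 = 0) by lra. rewrite <- Rsqr_pow2 in E1, E2. apply Rsqr_0_uniq in E1. apply Rsqr_0_uniq in E2. unfold RtoC. f_equal; lra. Qed.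

Lemma aa_1 : aa (RtoC 1) = 0.
Proof. unfold aa; simpl; ring. Qed.
Lemma bb_1 : bb (RtoC 1) = 0.
Proof. unfold bb; simpl; ring. Qed.

Lemma aff_step N u d : 1 <= N -> 0 < bb u -> aa u <= d * bb u ->
  0 < bb (aff N u) /\ aa (aff N u) * (N + (N-1) * d) <= d * bb (aff N u).
Proof.
  intros HN Hb Ha. pose proof (aff_aa N u ltac:(lra)). pose proof (aff_bb N u ltac:(lra)).
  pose proof (aa_ge0 u). pose proof (aa_ge0 (aff N u)).
  split.
  - nra.
  - assert (N^2 * (aa (aff N u) * (N + (N - 1) * d)) <= N^2 * (d * bb (aff N u))).
    { replace (N^2 * (aa (aff N u) * (N + (N - 1) * d))) with (aa u * (N + (N - 1) * d)) by (rewrite <- H; ring).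
      replace (N^2 * (d * bb (aff N u))) with (d * (N * bb u + (N - 1) * aa u)) by (rewrite <- H0; ring).
      nra. }
    assert (0 < N^2) by nra. nra.
Qed.

Lemma aff_weak N u : 1 < N -> 0 <= bb u -> 0 < bb (aff N u) \/ aff N u = RtoC 1.
Proof.
  intros HN Hb. pose proof (aff_bb N u ltac:(lra)). pose proof (aa_ge0 u).
  destruct (Req_dec (aa u) 0) as [E|E].
  - destruct (Req_dec (bb u) 0) as [E2|E2].
    + right. apply aa_0 in E. subst u. unfold aff, RtoC, Cmult, Cplus; simpl. f_equal; [field; lra | ring].
    + left. nra.
  - left. nra.
Qed.

Lemma pow_step v k : 0 < bb v -> (1 <= k)%nat ->
  0 < bb (v^k)%C /\ aa (v^k)%C * bb v <= INR k * aa v * bb (v^k)%C.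
Proof.
  intros Hb Hk. split.
  - rewrite bb_pow. pose proof (sr_ge1 (Cmod v ^ 2) k (pow2_ge_0 _) Hk). nra.
  - apply power_lemma. lra.
Qed.

Lemma bb_pow_ge0 v k : 0 <= bb v -> 0 <= bb (v^k)%C.
Proof. intros. rewrite bb_pow. pose proof (sr_ge0 (Cmod v ^ 2) k (pow2_ge_0 _)). nra. Qed.

Lemma chain1 A B bz bu N c : 0 < bz -> 0 < bu -> 0 <= N -> A * bz <= N * B * bu -> B <= c * bz -> A <= (N*c) * bu.
Proof.
  intros H1 H2 H3 H4 H5.
  assert (N * B * bu <= N * (c * bz) * bu).
  { apply Rmult_le_compat_r. lra. apply Rmult_le_compat_l; lra. }
  apply (Rmult_le_reg_r bz). lra. nra.
Qed.

Definition Step (f : C -> C) (k : R) :=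
  0 < k /\ forall z c, 0 < bb z -> 0 <= c -> aa z <= c * bb z ->
    0 < bb (f z) /\ aa (f z) * (1 + k * c) <= c * bb (f z).

Definition WStep (f : C -> C) := forall z, 0 <= bb z -> 0 < bb (f z) \/ f z = RtoC 1.

Definition Gn (n : nat) (z : C) : C := aff (INR n) (z ^ n)%C.
Definition Gmn (m n : nat) (z : C) : C := ((aff (INR (m * n)) (z ^ m)%C) ^ n)%C.

Lemma Gn_step n : (2 <= n)%nat -> Step (Gn n) (INR n - 1).
Proof.
  intros Hn. assert (H2 : 2 <= INR n) by (apply (le_INR 2); lia).
  split. lra. intros z c Hb Hc Ha. unfold Gn.
  destruct (pow_step z n Hb ltac:(lia)) as [Hbu Hau].
  assert (aa (z^n)%C <= (INR n * c) * bb (z^n)%C).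
  { apply (chain1 _ (aa z) (bb z) _ _ _ Hb Hbu); [lra|exact Hau|exact Ha]. }
  destruct (aff_step (INR n) _ (INR n * c) ltac:(lra) Hbu H) as [H1 H3].
  split. auto. 
  assert (INR n * (aa (aff (INR n) (z ^ n)%C) * (1 + (INR n - 1) * c)) <= INR n * (c * bb (aff (INR n) (z ^ n)%C))) by nra.
  nra.
Qed.

Lemma Gn_weak n : (2 <= n)%nat -> WStep (Gn n).
Proof.
  intros Hn z Hb. assert (H2 : 2 <= INR n) by (apply (le_INR 2); lia).
  apply aff_weak. lra. apply bb_pow_ge0; auto.
Qed.

Lemma Gmn_step m n : (2 <= m)%nat -> (2 <= n)%nat ->
  Step (Gmn m n) ((INR (m*n) - 1) * INR m / INR (m * n)).
Proof.
  intros Hm Hn. assert (Hm2 : 2 <= INR m) by (apply (le_INR 2); lia).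
  assert (Hn2 : 2 <= INR n) by (apply (le_INR 2); lia).
  rewrite mult_INR. set (M := INR m) in *. set (K := INR n) in *.
  assert (4 <= M * K) by nra.
  split. apply Rdiv_lt_0_compat; nra.
  intros z c Hb Hc Ha. unfold Gmn.
  destruct (pow_step z m Hb ltac:(lia)) as [Hbu Hau].
  fold M in Hau.
  assert (aa (z^m)%C <= (M * c) * bb (z^m)%C).
  { apply (chain1 _ (aa z) (bb z) _ _ _ Hb Hbu); [lra|exact Hau|exact Ha]. }
  rewrite mult_INR. fold M K.
  destruct (aff_step (M * K) _ (M * c) ltac:(lra) Hbu H0) as [H1 H3].
  set (v := aff (M * K) (z ^ m)%C) in *.
  destruct (pow_step v n H1 ltac:(lia)) as [H4 H5]. fold K in H5.
  split. auto.
  set (w := (v ^ n)%C) in *.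
  pose proof (aa_ge0 v). pose proof (aa_ge0 w).
  assert (E : 1 + (M * K - 1) * M / (M * K) * c = (M*K + (M*K - 1) * M * c) / (M * K)) by (field; lra).
  rewrite E.
  set (X := M * K + (M * K - 1) * (M * c)) in *.
  assert (HX : 0 <= X). { unfold X. assert (0 <= (M*K-1)*(M*c)). apply Rmult_le_pos; nra. lra. }
  assert (aa w * bb v * X <= K * (M * c) * bb w * bb v).
  { assert (aa w * bb v * X <= K * aa v * bb w * X) by (apply Rmult_le_compat_r; lra).
    assert (K * bb w * (aa v * X) <= K * bb w * (M * c * bb v)).
    { apply Rmult_le_compat_l. assert (0 <= K * bb w) by (apply Rmult_le_pos; lra). lra. lra. }
    lra. }
  assert (aa w * X <= K * (M * c) * bb w).
  { apply (Rmult_le_reg_r (bb v)). lra. lra. }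
  apply (Rmult_le_reg_r (M * K)). lra.
  replace (aa w * ((M * K + (M * K - 1) * M * c) / (M * K)) * (M * K)) with
     (aa w * X) by (unfold X; field; lra).
  lra.
Qed.

Lemma Gmn_weak m n : (2 <= m)%nat -> (2 <= n)%nat -> WStep (Gmn m n).
Proof.
  intros Hm Hn z Hb. assert (H2 : (4 <= m * n)%nat) by nia. apply le_INR in H2. replace (INR 4) with 4 in H2 by (simpl; lra).
  unfold Gmn. destruct (aff_weak (INR (m*n)) (z^m)%C ltac:(lra) (bb_pow_ge0 _ _ Hb)) as [H|H].
  - left. apply pow_step; auto. lia.
  - right. rewrite H. apply Cpow_1_l.
Qed.


Lemma Cmod_sub_sq w r : Cmod (w - RtoC r)%C ^ 2 = (fst w - r)^2 + snd w ^2.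
Proof. rewrite Cmod_sq. destruct w; simpl. ring. Qed.

Lemma cdisk_ineq r z : 0 <= r -> cdisk_r r z -> (1 - r) * aa z <= r * bb z.
Proof.
  intros Hr H. unfold cdisk_r in H. change (Cmod (z - RtoC (1 - r))%C <= r) in H.
  pose proof (Cmod_ge_0 (z - RtoC (1 - r))%C).
  assert (Cmod (z - RtoC (1 - r))%C ^ 2 <= r ^ 2) by nra.
  rewrite Cmod_sub_sq in H1. unfold aa, bb. nra.
Qed.

Lemma disk_of r w : 0 <= r -> (1 - r) * aa w < r * bb w -> disk_r r w.
Proof.
  intros Hr H. unfold disk_r. change (Cmod (w - RtoC (1 - r))%C < r).
  pose proof (Cmod_ge_0 (w - RtoC (1 - r))%C).
  assert (Cmod (w - RtoC (1 - r))%C ^ 2 < r ^ 2).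
  { rewrite Cmod_sub_sq. unfold aa, bb in H. nra. }
  nra.
Qed.

Lemma disk_thm f k : Step f k -> WStep f -> f (RtoC 1) = RtoC 1 ->
  forall r, 0 <= r <= 1 -> forall z, cdisk_r r z -> disk_r r (f z) \/ f z = RtoC 1.
Proof.
  intros [Hk HS] HW H1 r Hr z Hz.
  pose proof (cdisk_ineq r z (proj1 Hr) Hz) as Hi.
  pose proof (aa_ge0 z) as Ha0.
  destruct (Req_dec r 1) as [E|E].
  - subst r. destruct (HW z ltac:(lra)) as [H|H]; [left|right; auto].
    apply disk_of; lra.
  - destruct (Req_dec (aa z) 0) as [E2|E2].
    + right. apply aa_0 in E2. subst z. auto.
    + assert (Hb : 0 < bb z) by nra.
      assert (Hr0 : 0 < r) by nra.
      set (c := r / (1 - r)).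
      assert (Hc : 0 < c) by (unfold c; apply Rdiv_lt_0_compat; lra).
      assert (Hac : aa z <= c * bb z).
      { unfold c. apply (Rmult_le_reg_l (1 - r)). lra.
        replace ((1 - r) * (r / (1 - r) * bb z)) with (r * bb z) by (field; lra). lra. }
      destruct (HS z c Hb ltac:(lra) Hac) as [Hb' Ha'].
      left. apply disk_of. lra.
      pose proof (aa_ge0 (f z)).
      assert (aa (f z) < c * bb (f z)).
      { assert (0 < k * c * aa (f z) \/ aa (f z) = 0) by (destruct (Req_dec (aa (f z)) 0); [right; auto| left; apply Rmult_lt_0_compat; [apply Rmult_lt_0_compat|]; lra]).
        assert (0 < c * bb (f z)) by (apply Rmult_lt_0_compat; lra).
        destruct H0; nra. }
      replace (r * bb (f z)) with ((1 - r) * (c * bb (f z))) by (unfold c; field; lra).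
      apply Rmult_lt_compat_l; lra.
Qed.


Lemma iter_S f k z : Defs.iter f (S k) z = f (Defs.iter f k z).
Proof. reflexivity. Qed.

Lemma orbit_inv f k z : Step f k -> 0 < bb z ->
  forall j, 0 < bb (Defs.iter f j z) /\
    aa (Defs.iter f j z) * (1 + INR j * k * (aa z / bb z)) <= (aa z / bb z) * bb (Defs.iter f j z).
Proof.
  intros [Hk HS] Hb. set (c0 := aa z / bb z).
  assert (Hc0 : 0 <= c0) by (unfold c0; pose proof (aa_ge0 z); apply Rdiv_le_0_compat; lra).
  induction j.
  - simpl. split. auto. unfold c0. right. field. lra.
  - destruct IHj as [Hbj Haj]. rewrite iter_S.
    set (zj := Defs.iter f j z) in *.
    assert (HD : 0 < 1 + INR j * k * c0).
    { pose proof (pos_INR j). assert (0 <= INR j * k * c0) by (apply Rmult_le_pos; [apply Rmult_le_pos|]; lra). lra. }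
    assert (HD' : 1 + INR j * k * c0 <> 0) by lra.
    set (D := 1 + INR j * k * c0) in *.
    set (cj := c0 / D).
    assert (Hcj : 0 <= cj) by (unfold cj; apply Rdiv_le_0_compat; lra).
    assert (Hacj : aa zj <= cj * bb zj).
    { unfold cj. apply (Rmult_le_reg_l D). lra.
      replace (D * (c0 / D * bb zj)) with (c0 * bb zj) by (field; lra). lra. }
    destruct (HS zj cj Hbj Hcj Hacj) as [Hb' Ha'].
    split. auto.
    rewrite S_INR.
    replace (1 + (INR j + 1) * k * c0) with (D * (1 + k * cj)) by (unfold cj, D; field; exact HD').
    replace (c0 * bb (f zj)) with (D * (cj * bb (f zj))) by (unfold cj; field; lra).
    rewrite <- Rmult_assoc, (Rmult_comm _ D), Rmult_assoc.
    apply Rmult_le_compat_l; lra.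
Qed.

Lemma basin_thm f k z : Step f k -> Cmod z < 1 -> basin f (RtoC 1) z.
Proof.
  intros HSt Hz.
  assert (Hb : 0 < bb z).
  { rewrite bb_Cmod. pose proof (Cmod_ge_0 z). nra. }
  pose proof (orbit_inv f k z HSt Hb) as Hinv.
  destruct HSt as [Hk _].
  set (c0 := aa z / bb z) in *.
  assert (Hc0 : 0 <= c0) by (unfold c0; pose proof (aa_ge0 z); apply Rdiv_le_0_compat; lra).
  split.
  - intros j E. destruct (Hinv j) as [H _]. rewrite E, bb_1 in H. lra.
  - intros eps Heps.
    destruct (archimed (/ (k * eps^2))) as [Hup _].
    assert (Hkp : 0 < k * eps ^ 2) by (apply Rmult_lt_0_compat; [lra| apply pow_lt; lra]).
    assert (0 < / (k * eps^2)) by (apply Rinv_0_lt_compat; lra).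
    exists (Z.to_nat (up (/ (k * eps^2)))).
    intros j Hj. apply le_INR in Hj. rewrite INR_IZR_INZ, Z2Nat.id in Hj.
    2:{ apply le_IZR. lra. }
    destruct (Hinv j) as [Hbj Haj].
    set (zj := Defs.iter f j z) in *.
    assert (Hbj1 : bb zj <= 1) by (unfold bb; pose proof (pow2_ge_0 (fst zj)); pose proof (pow2_ge_0 (snd zj)); lra).
    pose proof (aa_ge0 zj) as Hzj.
    assert (HjK : 1 < INR j * (k * eps^2)).
    { apply (Rmult_lt_reg_r (/ (k * eps^2))). auto. rewrite Rmult_assoc, Rinv_r, Rmult_1_r, Rmult_1_l; lra. }
    assert (Hmain : aa zj * (INR j * k) <= 1).
    { assert (aa zj * (1 + INR j * k * c0) <= c0) by nra.
      destruct (Req_dec c0 0) as [E|E].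
      - rewrite E in H0. assert (aa zj = 0) by nra. rewrite H1. lra.
      - assert (0 < c0) by lra.
        apply (Rmult_le_reg_r c0). auto. nra. }
    assert (Hae : aa zj < eps ^ 2).
    { assert (0 < INR j) by (destruct (Rle_lt_dec (INR j) 0); [nra|auto]).
      apply (Rmult_lt_reg_r (INR j * k)). apply Rmult_lt_0_compat; lra. nra. }
    change (Cmod (zj - RtoC 1)%C < eps).
    pose proof (Cmod_ge_0 (zj - RtoC 1)%C).
    assert (Cmod (zj - RtoC 1)%C ^ 2 < eps ^ 2).
    { rewrite Cmod_sub_sq. unfold aa in Hae. replace ((fst zj - 1)^2) with ((1 - fst zj)^2) by ring. lra. }
    nra.
Qed.


Lemma core (p : R -> C) L (U V : C -> Prop) t0 t1 :
  0 <= L -> (forall s t, Cmod (p s - p t)%C <= L * Rabs (s - t)) ->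
  Copen U -> Copen V -> t0 < t1 -> U (p t0) -> V (p t1) ->
  (forall t, t0 <= t <= t1 -> U (p t) \/ V (p t)) ->
  (forall t, t0 <= t <= t1 -> U (p t) -> V (p t) -> False) -> False.
Proof.
  intros HL Hlip HU HV Ht H0 H1 Hcov Hdis.
  set (E := fun s => t0 <= s <= t1 /\ forall t, t0 <= t <= s -> U (p t)).
  assert (Hb : bound E) by (exists t1; intros s [Hs _]; lra).
  assert (He : exists x, E x).
  { exists t0. split. lra. intros t Ht'. replace t with t0 by lra. auto. }
  destruct (completeness E Hb He) as [sg [Hub Hlub]].
  assert (Hs0 : t0 <= sg) by (apply Hub; destruct He as [x Hx]; split; [lra|]; intros t Ht'; replace t with t0 by lra; auto).
  assert (Hs1 : sg <= t1) by (apply Hlub; intros s [Hs _]; lra).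
  assert (HA : forall t, t0 <= t < sg -> U (p t)).
  { intros t Ht'. destruct (Hcov t ltac:(lra)) as [Hu|Hv]; auto.
    exfalso. assert (is_upper_bound E t).
    { intros s [Hs Hs2]. destruct (Rle_lt_dec s t); auto.
      exfalso. apply (Hdis t); auto. lra. apply Hs2. lra. }
    specialize (Hlub t H). lra. }
  assert (Hcont : forall W : C -> Prop, Copen W -> W (p sg) ->
     exists d, 0 < d /\ forall t, Rabs (t - sg) < d -> W (p t)).
  { intros W HW Hw. destruct (HW _ Hw) as [e [He0 HWe]].
    exists (e / (L + 1)). split. apply Rdiv_lt_0_compat; lra.
    intros t Htd. apply HWe. change (Cmod (p t - p sg)%C < e).
    eapply Rle_lt_trans. apply Hlip.
    assert (L * Rabs (t - sg) <= L * (e / (L + 1))) by (apply Rmult_le_compat_l; lra).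
    assert (L * (e / (L+1)) < e).
    { apply (Rmult_lt_reg_r (L+1)). lra. replace (L * (e / (L + 1)) * (L + 1)) with (L * e) by (field; lra). nra. }
    lra. }
  destruct (Hcov sg ltac:(lra)) as [Hu|Hv].
  - destruct (Hcont U HU Hu) as [d [Hd HUd]].
    destruct (Req_dec sg t1) as [Eq|Neq].
    + rewrite Eq in Hu. apply (Hdis t1); [lra|auto|auto].
    + set (s' := Rmin (sg + d / 2) t1).
      assert (E s').
      { unfold s'. split. split. pose proof (Rmin_glb (sg + d/2) t1 t0). 
        apply Rmin_glb; lra. apply Rmin_r.
        intros t Ht'. destruct (Rlt_le_dec t sg). apply HA; lra.
        apply HUd. pose proof (Rmin_l (sg + d/2) t1). rewrite Rabs_right; lra. }
      specialize (Hub s' H).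
      assert (sg < s') by (unfold s'; apply Rmin_glb_lt; lra). lra.
  - destruct (Hcont V HV Hv) as [d [Hd HVd]].
    destruct (Req_dec sg t0) as [Eq|Neq].
    + rewrite Eq in Hv. apply (Hdis t0); [lra|auto|auto].
    + set (t := Rmax t0 (sg - d / 2)).
      assert (t0 <= t < sg).
      { unfold t. split. apply Rmax_l. apply Rmax_lub_lt; lra. }
      apply (Hdis t). lra. apply HA; lra. apply HVd.
      assert (sg - d/2 <= t) by apply Rmax_r. rewrite Rabs_left1; lra.
Qed.

Lemma seg_conn (p : R -> C) L : 0 <= L ->
  (forall s t, Cmod (p s - p t)%C <= L * Rabs (s - t)) ->
  Cconnected (fun w => exists t, 0 <= t < 1 /\ w = p t).
Proof.
  intros HL Hlip [U [V [HU [HV [Hcov [[w0 [[t0 [Ht0 E0]] Hu]] [[w1 [[t1 [Ht1 E1]] Hv]] Hdis]]]]]]].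
  subst w0 w1.
  assert (Hc : forall t, 0 <= t < 1 -> U (p t) \/ V (p t)) by (intros t Ht; apply Hcov; eauto).
  assert (Hd : forall t, 0 <= t < 1 -> U (p t) -> V (p t) -> False) by (intros t Ht; apply Hdis; eauto).
  destruct (Rtotal_order t0 t1) as [Hlt|[Heq|Hgt]].
  - apply (core p L U V t0 t1); auto; intros t Ht; [apply Hc|apply Hd]; lra.
  - subst t1. apply (Hd t0); auto.
  - apply (core p L V U t1 t0); auto; intros t Ht; [destruct (Hc t ltac:(lra)); tauto|].
    intros; apply (Hd t); auto; lra.
Qed.

Lemma imm_thm f k z : Step f k -> Cmod z < 1 -> immediate_basin f (RtoC 1) z.
Proof.
  intros HS Hz.
  set (p := fun t : R => (z + RtoC t * (RtoC 1 - z))%C).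
  set (L := Cmod (RtoC 1 - z)%C).
  assert (HL : 0 <= L) by apply Cmod_ge_0.
  assert (Hlip : forall s t, Cmod (p s - p t)%C <= L * Rabs (s - t)).
  { intros s t. unfold p, L. right.
    replace (z + RtoC s * (RtoC 1 - z) - (z + RtoC t * (RtoC 1 - z)))%C with (RtoC (s - t) * (RtoC 1 - z))%C.
    rewrite Cmod_mult, Cmod_R. ring.
    destruct z; unfold Cminus, Cplus, Cmult, Copp, RtoC; simpl; f_equal; ring. }
  exists (fun w => exists t, 0 <= t < 1 /\ w = p t).
  split; [|split; [|split]].
  - apply (seg_conn p L HL Hlip).
  - exists 0. split. lra. unfold p. destruct z; unfold Cminus, Cplus, Cmult, Copp, RtoC; simpl; f_equal; ring.
  - intros w [t [Ht ->]]. apply (basin_thm f k); auto.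
    unfold p. replace (z + RtoC t * (RtoC 1 - z))%C with (RtoC (1 - t) * z + RtoC t)%C
      by (destruct z; unfold Cminus, Cplus, Cmult, Copp, RtoC; simpl; f_equal; ring).
    eapply Rle_lt_trans. apply Cmod_triangle. rewrite Cmod_mult, !Cmod_R, !Rabs_right by lra.
    pose proof (Cmod_ge_0 z). nra.
  - intros eps Heps. set (d := eps / (L + 1 + eps)).
    assert (Hd : 0 < d < 1).
    { unfold d. split. apply Rdiv_lt_0_compat; lra.
      apply (Rmult_lt_reg_r (L + 1 + eps)). lra. unfold Rdiv. rewrite Rmult_assoc, Rinv_l; lra. }
    exists (p (1 - d)%R). split. exists (1 - d). split; [lra|auto].
    assert (E1 : p 1 = RtoC 1) by (unfold p; destruct z; unfold Cminus, Cplus, Cmult, Copp, RtoC; simpl; f_equal; ring).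
    change (Cmod (p (1 - d)%R - RtoC 1)%C < eps). rewrite <- E1.
    eapply Rle_lt_trans. apply Hlip.
    replace (1 - d - 1) with (- d) by ring. rewrite Rabs_Ropp, Rabs_right by lra.
    assert (L * d < eps).
    { unfold d. apply (Rmult_lt_reg_r (L + 1 + eps)). lra.
      replace (L * (eps / (L + 1 + eps)) * (L + 1 + eps)) with (L * eps) by (field; lra). nra. }
    lra.
Qed.


Definition Dq (f : C -> C) (p l : C) := exists K d, 0 <= K /\ 0 < d /\
  forall h, Cmod h < d -> Cmod (f (p + h) - f p - l * h)%C <= K * Cmod h ^ 2.

Lemma Dq_const c p : Dq (fun _ => c) p (RtoC 0).
Proof.
  exists 0, 1. split. lra. split. lra. intros h _.
  replace (c - c - RtoC 0 * h)%C with (RtoC 0) by ring. rewrite Cmod_0. lra.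
Qed.

Lemma Dq_id p : Dq (fun z => z) p (RtoC 1).
Proof.
  exists 0, 1. split. lra. split. lra. intros h _.
  replace (p + h - p - RtoC 1 * h)%C with (RtoC 0) by ring. rewrite Cmod_0. lra.
Qed.

Lemma Dq_ext f g p l l' : (forall z, f z = g z) -> l = l' -> Dq f p l -> Dq g p l'.
Proof.
  intros E El [K [d [HK [Hd H]]]]. exists K, d. split; auto. split; auto.
  intros h Hh. rewrite <- !E, <- El. auto.
Qed.

Lemma Dq_add f g p lf lg : Dq f p lf -> Dq g p lg -> Dq (fun z => f z + g z)%C p (lf + lg)%C.
Proof.
  intros [K1 [d1 [HK1 [Hd1 H1]]]] [K2 [d2 [HK2 [Hd2 H2]]]].
  exists (K1 + K2), (Rmin d1 d2). split. lra. split. apply Rmin_pos; auto.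
  intros h Hh. pose proof (Rmin_l d1 d2). pose proof (Rmin_r d1 d2).
  replace (f (p + h) + g (p + h) - (f p + g p) - (lf + lg) * h)%C with
    ((f (p + h) - f p - lf * h) + (g (p + h) - g p - lg * h))%C by ring.
  eapply Rle_trans. apply Cmod_triangle.
  specialize (H1 h ltac:(lra)). specialize (H2 h ltac:(lra)). lra.
Qed.

Lemma Dq_mul f g p lf lg : Dq f p lf -> Dq g p lg ->
  Dq (fun z => f z * g z)%C p (lf * g p + f p * lg)%C.
Proof.
  intros [K1 [d1 [HK1 [Hd1 H1]]]] [K2 [d2 [HK2 [Hd2 H2]]]].
  set (A := Cmod (f p)). set (B := Cmod (g p)). set (P := Cmod lf). set (Q := Cmod lg).
  assert (0 <= A /\ 0 <= B /\ 0 <= P /\ 0 <= Q) as [HA [HB [HP HQ]]] by (repeat split; apply Cmod_ge_0).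
  exists (A * K2 + B * K1 + (P + K1) * (Q + K2)), (Rmin 1 (Rmin d1 d2)).
  split. assert (0 <= (P + K1) * (Q + K2)) by (apply Rmult_le_pos; lra).
  assert (0 <= A * K2) by (apply Rmult_le_pos; lra). assert (0 <= B * K1) by (apply Rmult_le_pos; lra). lra.
  split. apply Rmin_pos. lra. apply Rmin_pos; auto.
  intros h Hh. pose proof (Rmin_l 1 (Rmin d1 d2)). pose proof (Rmin_r 1 (Rmin d1 d2)).
  pose proof (Rmin_l d1 d2). pose proof (Rmin_r d1 d2).
  set (Hm := Cmod h) in *. assert (HH : 0 <= Hm) by apply Cmod_ge_0.
  set (e1 := (f (p + h) - f p - lf * h)%C). set (e2 := (g (p + h) - g p - lg * h)%C).
  assert (Hm1 : Hm <= 1) by lra.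
  assert (Hsq : Hm ^ 2 <= Hm) by (replace (Hm^2) with (Hm*Hm) by ring; rewrite <- (Rmult_1_r Hm) at 3; apply Rmult_le_compat_l; lra).
  assert (Hm_d1 : Hm < d1) by lra. assert (Hm_d2 : Hm < d2) by lra.
  assert (He1 : Cmod e1 <= K1 * Hm ^ 2) by (apply H1; exact Hm_d1).
  assert (He2 : Cmod e2 <= K2 * Hm ^ 2) by (apply H2; exact Hm_d2).
  replace (f (p + h) * g (p + h) - f p * g p - (lf * g p + f p * lg) * h)%C with
    (f p * e2 + g p * e1 + (lf * h + e1) * (lg * h + e2))%C by (unfold e1, e2; ring).
  assert (HX : Cmod (lf * h + e1)%C <= (P + K1) * Hm).
  { eapply Rle_trans. apply Cmod_triangle. rewrite Cmod_mult. fold P Hm.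
    assert (K1 * Hm^2 <= K1 * Hm) by (apply Rmult_le_compat_l; lra). lra. }
  assert (HY : Cmod (lg * h + e2)%C <= (Q + K2) * Hm).
  { eapply Rle_trans. apply Cmod_triangle. rewrite Cmod_mult. fold Q Hm.
    assert (K2 * Hm^2 <= K2 * Hm) by (apply Rmult_le_compat_l; lra). lra. }
  eapply Rle_trans. apply Cmod_triangle.
  eapply Rle_trans. apply Rplus_le_compat_r. apply Cmod_triangle.
  rewrite !Cmod_mult. fold A B.
  assert (A * Cmod e2 <= A * (K2 * Hm^2)) by (apply Rmult_le_compat_l; lra).
  assert (B * Cmod e1 <= B * (K1 * Hm^2)) by (apply Rmult_le_compat_l; lra).
  assert (Cmod (lf * h + e1)%C * Cmod (lg * h + e2)%C <= ((P + K1) * Hm) * ((Q + K2) * Hm)).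
  { apply Rmult_le_compat; try apply Cmod_ge_0; auto. }
  nra.
Qed.

Lemma Dq_pow F p l k : Dq F p l ->
  Dq (fun z => F z ^ S k)%C p (RtoC (INR (S k)) * F p ^ k * l)%C.
Proof.
  intros HF. induction k.
  - eapply Dq_ext; [| |exact HF]. intros z; simpl; ring. simpl. ring.
  - eapply Dq_ext; [| |exact (Dq_mul _ _ p _ _ HF IHk)].
    intros z. reflexivity.
    rewrite !S_INR. cbn [Cpow]. rewrite !RtoC_plus. ring.
Qed.

Lemma Dq_cderiv f p l : Dq f p l -> has_cderiv f p l.
Proof.
  intros [K [d [HK [Hd H]]]] eps Heps.
  exists (Rmin d (eps / (K + 1))). split. apply Rmin_pos; auto. apply Rdiv_lt_0_compat; lra.
  intros h [Hh0 Hh]. change (0 < Cmod h) in Hh0. change (Cmod h < Rmin d (eps / (K + 1))) in Hh. pose proof (Rmin_l d (eps / (K + 1))). pose proof (Rmin_r d (eps / (K + 1))).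
  change (Cmod ((f (p + h) - f p) / h - l)%C < eps).
  assert (hnz : h <> RtoC 0) by (apply Cmod_gt_0; auto).
  replace ((f (p + h) - f p) / h - l)%C with ((f (p + h) - f p - l * h) / h)%C by (field; auto).
  rewrite Cmod_div by auto.
  specialize (H h ltac:(lra)).
  apply (Rmult_lt_reg_r (Cmod h)). auto.
  unfold Rdiv. rewrite Rmult_assoc, Rinv_l, Rmult_1_r by lra.
  assert (K * Cmod h < eps).
  { apply (Rle_lt_trans _ (K * (eps / (K + 1)))). apply Rmult_le_compat_l; lra.
    apply (Rmult_lt_reg_r (K+1)). lra. replace (K * (eps / (K + 1)) * (K + 1)) with (K * eps) by (field; lra). nra. }
  nra.
Qed.


Lemma Step_ext f g k : (forall z, f z = g z) -> Step f k -> Step g k.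
Proof. intros E [Hk H]. split; auto. intros z c H1 H2 H3. rewrite <- E. auto. Qed.
Lemma WStep_ext f g : (forall z, f z = g z) -> WStep f -> WStep g.
Proof. intros E H z Hz. rewrite <- E. auto. Qed.

Lemma gmn_eq m n z : g_mn m n z = Gmn m n z.
Proof.
  unfold Gmn, aff. change (RtoC (/ INR (m * n) ^ n) * (z ^ m + RtoC (INR (m * n) - 1)) ^ n = (RtoC (/ INR (m * n)) * (z ^ m + RtoC (INR (m * n) - 1))) ^ n)%C.
  rewrite Cpow_mult_l, <- RtoC_pow, pow_inv. reflexivity.
Qed.

Lemma gn_1 n : (1 <= n)%nat -> g_n n (RtoC 1) = RtoC 1.
Proof.
  intros Hn. change (RtoC (/ INR n) * (RtoC 1 ^ n + RtoC (INR n - 1)) = RtoC 1)%C.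
  rewrite Cpow_1_l. rewrite <- RtoC_plus, <- RtoC_mult. f_equal.
  assert (1 <= INR n) by (apply (le_INR 1); lia). field. lra.
Qed.

Lemma gmn_1 m n : (1 <= m)%nat -> (1 <= n)%nat -> g_mn m n (RtoC 1) = RtoC 1.
Proof.
  intros Hm Hn. rewrite gmn_eq. unfold Gmn, aff.
  rewrite Cpow_1_l. rewrite <- RtoC_plus, <- RtoC_mult.
  replace (/ INR (m * n) * (1 + (INR (m * n) - 1))) with 1. apply Cpow_1_l.
  assert (1 <= INR (m*n)) by (apply (le_INR 1); nia). field. lra.
Qed.

Lemma gn_deriv n : (1 <= n)%nat -> has_cderiv (g_n n) (RtoC 1) (RtoC 1).
Proof.
  intros Hn. apply Dq_cderiv. destruct n as [|k]. lia.
  pose proof (Dq_pow _ (RtoC 1) _ k (Dq_id (RtoC 1))) as H1.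
  pose proof (Dq_add _ _ _ _ _ H1 (Dq_const (RtoC (INR (S k) - 1)) (RtoC 1))) as H2.
  pose proof (Dq_mul _ _ _ _ _ (Dq_const (RtoC (/ INR (S k))) (RtoC 1)) H2) as H3.
  eapply Dq_ext; [| |exact H3].
  - intros z. reflexivity.
  - cbv beta. rewrite !Cpow_1_l, Cmult_0_l, Cplus_0_l, Cplus_0_r, !Cmult_1_r, <- RtoC_mult. f_equal.
    assert (1 <= INR (S k)) by (apply (le_INR 1); lia). field. lra.
Qed.

Lemma gmn_deriv m n : (1 <= m)%nat -> (1 <= n)%nat -> has_cderiv (g_mn m n) (RtoC 1) (RtoC 1).
Proof.
  intros Hm Hn. apply Dq_cderiv. destruct m as [|j]. lia. destruct n as [|k]. lia.
  set (N := INR (S j * S k)).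
  pose proof (Dq_pow _ (RtoC 1) _ j (Dq_id (RtoC 1))) as H1.
  pose proof (Dq_add _ _ _ _ _ H1 (Dq_const (RtoC (N - 1)) (RtoC 1))) as H2.
  pose proof (Dq_pow _ _ _ k H2) as H3.
  pose proof (Dq_mul _ _ _ _ _ (Dq_const (RtoC (/ N ^ S k)) (RtoC 1)) H3) as H4.
  eapply Dq_ext; [| |exact H4].
  - intros z. reflexivity.
  - cbv beta. rewrite !Cpow_1_l. rewrite Cmult_0_l, Cplus_0_l, Cplus_0_r, !Cmult_1_r, <- RtoC_plus, <- RtoC_pow, <- !RtoC_mult. f_equal.

    assert (HN : N = INR (S j) * INR (S k)) by (unfold N; apply mult_INR).
    assert (1 <= INR (S j)) by (apply (le_INR 1); lia).
    assert (1 <= INR (S k)) by (apply (le_INR 1); lia).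
    replace (1 + (N - 1)) with N by ring. cbn [pow].
    rewrite HN. field. repeat split; try apply pow_nonzero; nra.
Qed.

Import Pilot.Defs.
Open Scope R_scope.

Theorem lemma2p5 (m n : nat) (hm : (2 <= m)%nat) (hn : (2 <= n)%nat) :
  (* 1 is a parabolic fixed point with multiplier 1 for both maps *)
  (g_n n (RtoC 1) = RtoC 1 /\ has_cderiv (g_n n) (RtoC 1) (RtoC 1)) /\
  (g_mn m n (RtoC 1) = RtoC 1 /\ has_cderiv (g_mn m n) (RtoC 1) (RtoC 1)) /\
  (* invariance of the disks D_r *)
  (forall r, 0 <= r <= 1 -> forall z, cdisk_r r z ->
     disk_r r (g_n n z) \/ g_n n z = RtoC 1) /\
  (forall r, 0 <= r <= 1 -> forall z, cdisk_r r z ->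
     disk_r r (g_mn m n z) \/ g_mn m n z = RtoC 1) /\
  (* the unit disk lies in the immediate parabolic basins of 1 *)
  (forall z, unit_disk z -> immediate_basin (g_n n) (RtoC 1) z) /\
  (forall z, unit_disk z -> immediate_basin (g_mn m n) (RtoC 1) z).
Proof.
  assert (Hm1 : (1 <= m)%nat) by lia. assert (Hn1 : (1 <= n)%nat) by lia.
  assert (SGn : Step (g_n n) (INR n - 1)) by exact (Gn_step n hn).
  assert (WGn : WStep (g_n n)) by exact (Gn_weak n hn).
  assert (SGmn : Step (g_mn m n) ((INR (m*n) - 1) * INR m / INR (m * n))).
  { apply (Step_ext (Gmn m n)). intros z; symmetry; apply gmn_eq. apply Gmn_step; auto. }
  assert (WGmn : WStep (g_mn m n)).
  { apply (WStep_ext (Gmn m n)). intros z; symmetry; apply gmn_eq. apply Gmn_weak; auto. }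
  split; [split; [apply gn_1; auto | apply gn_deriv; auto]|].
  split; [split; [apply gmn_1; auto | apply gmn_deriv; auto]|].
  split; [apply (disk_thm _ _ SGn WGn (gn_1 n Hn1))|].
  split; [apply (disk_thm _ _ SGmn WGmn (gmn_1 m n Hm1 Hn1))|].
  split; intros z Hz; [apply (imm_thm _ _ z SGn) | apply (imm_thm _ _ z SGmn)]; exact Hz.
Qed.
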